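(* For every positive integer $n$, the number of ordered set partitions of $[n]$ into exactly $3$ blocks that avoid the pattern $132$ is $$\operatorname{op}_{n,3}(132) = \left(\frac{n^2}{8}+\frac{3n}{8}-2\right)2^n+3.$$
   Context: An ordered set partition of $[n]$ into $k$ blocks is a sequence $B_1/B_2/\cdots/B_k$ of nonempty, pairwise disjoint subsets of $[n]$ whose union is $[n]$; the order of the blocks matters, but not the order of elements within a block. For a permutation $\rho=\rho_1\cdots\rho_m\in\mathcal{S}_m$, an ordered partition $B_1/\cdots/B_k$ contains $\rho$ if there are block indices $i_1<i_2<\cdots<i_m$ and elements $b_j\in B_{i_j}$ such that $b_1\cdots b_m$ is order-isomorphic to $\rho$ (i.e. $b_a<b_c$ iff $\rho_a<\rho_c$); otherwise it avoids $\rho$. $\operatorname{op}_{n,k}(\rho)$ denotes the number of ordered partitions of $[n]$ into $k$ blocks that avoid $\rho$. *)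

(* Defs.v *)
From mathcomp Require Import all_boot all_order all_algebra.
Set Implicit Arguments. Unset Strict Implicit. Unset Printing Implicit Defensive.

(* [n] = {1,...,n} is represented by 'I_n = {0,...,n-1} (order-preserving shift).
   An ordered set partition into k blocks is a k-tuple of sets B : 'I_k -> {set 'I_n}
   (block B i is the (i+1)-th block), nonempty, pairwise disjoint, covering. *)
Definition is_ordered_partition (n k : nat) (B : {ffun 'I_k -> {set 'I_n}}) : bool :=
  [&& [forall i, B i != set0],
      [forall i, forall j, (i != j) ==> [disjoint B i & B j]] &
      \bigcup_(i < k) B i == [set: 'I_n]].

Definition op_contains (n k : nat) (B : {ffun 'I_k -> {set 'I_n}}) (rho : seq nat) : bool :=
  [exists idx : {ffun 'I_(size rho) -> 'I_k},
    [exists b : {ffun 'I_(size rho) -> 'I_n},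
      [&& [forall a : 'I_(size rho), forall c : 'I_(size rho),
              (a < c)%N ==> (idx a < idx c)%N],
          [forall j, b j \in B (idx j)] &
          [forall a : 'I_(size rho), forall c : 'I_(size rho),
              (b a < b c)%N == (nth 0%N rho a < nth 0%N rho c)%N]]]].

Definition op_count (n k : nat) (rho : seq nat) : nat :=
  #|[set B : {ffun 'I_k -> {set 'I_n}} |
      is_ordered_partition B && ~~ op_contains B rho]|.

Definition pat132 : seq nat := [:: 1; 3; 2]%N.

(* Main.v *)
Require Import Defs.
From mathcomp Require Import all_boot all_order all_algebra zify ring lra.
Import GRing.Theory Num.Theory.
Set Implicit Arguments. Unset Strict Implicit.

Section SA.



Variable T : finType.
Definition cnt n (P : seq T -> bool) := #|[set t : n.-tuple T | P t]|.

Lemma eq_cnt n P Q : P =1 Q -> cnt n P = cnt n Q.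
Proof. by move=> h; rewrite /cnt; apply: eq_card => t; rewrite !inE h. Qed.

Lemma cnt0 P : cnt 0 P = P [::].
Proof.
rewrite /cnt; case h: (P [::]).
  rewrite (_ : [set t : 0.-tuple T | P t] = setT) ?cardsT ?card_tuple //.
  by apply/setP => t; rewrite !inE (tuple0 t) h.
apply/eqP; rewrite cards_eq0; apply/eqP/setP => t.
by rewrite !inE (tuple0 t) h.
Qed.

Lemma cnt_false' n (P : seq T -> bool) : P =1 xpred0 -> cnt n P = 0.
Proof. by move=> h; apply/eqP; rewrite cards_eq0; apply/eqP/setP => t; rewrite !inE h. Qed.

Lemma cnt_false n : cnt n (fun _ => false) = 0.
Proof. by apply/eqP; rewrite cards_eq0; apply/eqP/setP => t; rewrite !inE. Qed.

Lemma cntS n P : cnt n.+1 P = \sum_(a : T) cnt n (fun s => P (a :: s)).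
Proof.
rewrite /cnt -sum1_card (partition_big (fun t : n.+1.-tuple T => thead t) predT) //=.
apply: eq_bigr => a _.
have inj : injective (fun t : n.-tuple T => [tuple of a :: t]).
  by move=> t1 t2 h; apply: val_inj; exact: (congr1 behead (congr1 val h)).
rewrite -(card_imset _ inj).
rewrite -sum1_card; apply: eq_bigl => t; rewrite !inE.
apply/idP/idP.
  case/andP => Pt /eqP ht; apply/imsetP; exists (behead_tuple t).
    by rewrite inE -ht; move: Pt; rewrite {1}(tuple_eta t).
  by rewrite -ht; exact: tuple_eta.
case/imsetP => u; rewrite inE => Pu ->; rewrite Pu /=.
by rewrite /thead (tnth_nth a) /=.
Qed.


End SA.


Definition o0 : 'I_3 := @Ordinal 3 0 isT.
Definition o1 : 'I_3 := @Ordinal 3 1 isT.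
Definition o2 : 'I_3 := @Ordinal 3 2 isT.

Lemma sum3 (F : 'I_3 -> nat) : \sum_(a : 'I_3) F a = F o0 + F o1 + F o2.
Proof.
rewrite !big_ord_recl big_ord0 addn0 addnA.
by congr (F _ + F _ + F _); apply: val_inj.
Qed.

Definition cp (p : seq nat) n := cnt n (fun s : seq 'I_3 => ~~ subseq p (map val s)).

Lemma cp_nil p : p != [::] -> cp p 0 = 1.
Proof. by rewrite /cp cnt0 /=; case: p. Qed.

Lemma c2S n : cp [::1] n.+1 = 2 * cp [::1] n.
Proof.
rewrite /cp cntS sum3 /=.
rewrite [X in _ + X + _]cnt_false'; first by lia.
by move=> s /=; rewrite sub0seq.
Qed.

Lemma c1S n : cp [::2;1] n.+1 = 2 * cp [::2;1] n + cp [::1] n.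
Proof. by rewrite /cp cntS sum3 /=; lia. Qed.

Lemma c0S n : cp [::0;2;1] n.+1 = 2 * cp [::0;2;1] n + cp [::2;1] n.
Proof. by rewrite /cp cntS sum3 /=; lia. Qed.

Lemma c2E n : cp [::1] n = 2 ^ n.
Proof. elim: n => [|n IH]; first by rewrite cp_nil. by rewrite c2S IH expnS. Qed.

Lemma c1E n : 2 * cp [::2;1] n = 2 ^ n * (n + 2).
Proof.
elim: n => [|n IH]; first by rewrite cp_nil.
rewrite c1S c2E expnS; nia.
Qed.

Lemma c0E n : 8 * cp [::0;2;1] n = 2 ^ n * (n ^ 2 + 3 * n + 8).
Proof.
elim: n => [|n IH]; first by rewrite cp_nil.
have := c1E n; rewrite c0S expnS; nia.
Qed.


Definition Qs (S : {set 'I_3}) (s : seq 'I_3) := S \subset [set:: s].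

Lemma Qs_cons S a s : Qs S (a :: s) = Qs (S :\ a) s.
Proof. by rewrite /Qs set_cons subDset. Qed.

Fixpoint F n k := if n is n'.+1 then k * F n' k.-1 + (3 - k) * F n' k else (k == 0 : nat).

Lemma cntQ n S : cnt n (Qs S) = F n #|S|.
Proof.
elim: n S => [|n IH] S.
  by rewrite cnt0 /Qs /= subset0 cards_eq0.
rewrite cntS /=.
rewrite (eq_bigr (fun a => F n #|S :\ a|)); last first.
  by move=> a _; rewrite -IH; apply: eq_cnt => s; rewrite Qs_cons.
rewrite (bigID (fun a => a \in S)) /=.
rewrite (eq_bigr (fun _ => F n #|S|.-1)); last first.
  by move=> a aS; rewrite (cardsD1 a S) aS.
rewrite (eq_bigr (fun _ => F n #|S|) (P := fun a => a \notin S)); last first.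
  by move=> a aS; rewrite (cardsD1 a S) (negbTE aS).
rewrite sum_nat_const.
rewrite (eq_bigl (fun a => a \in ~: S)); last by move=> a; rewrite inE.
rewrite sum_nat_const.
have := cardsC S; rewrite card_ord => h.
have -> : #|~: S| = 3 - #|S| by lia.
done.
Qed.

Lemma F0 n : F n 0 = 3 ^ n.
Proof. by elim: n => //= n ->; rewrite expnS. Qed.
Lemma F1 n : F n 1 + 2 ^ n = 3 ^ n.
Proof. elim: n => //= n IH; rewrite F0 !expnS; lia. Qed.
Lemma F2 n : F n 2 + 2 * 2 ^ n = 3 ^ n + 1.
Proof. elim: n => //= n IH; have := F1 n; rewrite !expnS; lia. Qed.
Lemma F3 n : F n.+1 3 + 3 * 2 ^ n.+1 = 3 ^ n.+1 + 3.
Proof. rewrite /=; have := F2 n; rewrite !expnS; lia. Qed.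


Lemma L2 (b c : nat) (s : seq nat) :
  subseq [:: b; c] s <-> exists z y, [/\ z < y, y < size s, nth 0 s z = b & nth 0 s y = c].
Proof.
elim: s => [|h s IH] /=.
  by split => //; case=> z [y] [].
case: eqP => [<-|nbh].
  rewrite sub1seq; split.
    move/(nthP 0) => [y ys yc]; exists 0, y.+1; split => //.
  case=> z [y] [zy ys _ yc]; apply/(nthP 0).
  by case: y zy ys yc => [|y] // _ ys yc; exists y.
split.
  move/IH; case=> z [y] [zy ys zb yc]; exists z.+1, y.+1; split => //.
case=> z [y] [zy ys zb yc]; apply/IH.
case: z zy zb => [|z] zy zb; first by case: nbh.
case: y zy ys yc => [|y] // zy ys yc.
by exists z, y.
Qed.

Lemma L3 (a b c : nat) (s : seq nat) :
  subseq [:: a; b; c] s <-> exists x z y,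
    [/\ x < z, z < y, y < size s, nth 0 s x = a & (nth 0 s z = b /\ nth 0 s y = c)].
Proof.
elim: s => [|h s IH] /=.
  by split => //; case=> x [z] [y] [].
case: eqP => [<-|nah].
  split.
    move/L2; case=> z [y] [zy ys zb yc]; exists 0, z.+1, y.+1; split => //.
  case=> x [z] [y] [xz zy ys _ [zb yc]]; apply/L2.
  case: z xz zy zb => [|z] // _ zy zb.
  case: y zy ys yc => [|y] // zy ys yc.
  by exists z, y.
split.
  move/IH; case=> x [z] [y] [xz zy ys xa [zb yc]]; exists x.+1, z.+1, y.+1; split => //.
case=> x [z] [y] [xz zy ys xa [zb yc]]; apply/IH.
case: x xz xa => [|x] xz xa; first by case: nah.
case: z xz zy zb => [|z] // xz zy zb.
case: y zy ys yc => [|y] // zy ys yc.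
by exists x, z, y.
Qed.


Section S.

Variable n : nat.
Definition Bof (f : {ffun 'I_n -> 'I_3}) : {ffun 'I_3 -> {set 'I_n}} :=
  [ffun i => [set x | f x == i]].
Definition surj (f : {ffun 'I_n -> 'I_3}) := [forall i : 'I_3, [exists x, f x == i]].
Definition c3f (f : {ffun 'I_n -> 'I_3}) :=
  [exists x : 'I_n, [exists z : 'I_n, [exists y : 'I_n,
     [&& x < z, z < y, f x == o0, f z == o2 & f y == o1]]]].

Lemma contains_Bof f : op_contains (Bof f) pat132 = c3f f.
Proof.
rewrite /op_contains /=; apply/idP/idP.
  case/existsP => idx /existsP [b /and3P [inc mem ord]].
  have i01 : idx o0 < idx o1 := implyP (forallP (forallP inc o0) o1) isT.
  have i12 : idx o1 < idx o2 := implyP (forallP (forallP inc o1) o2) isT.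
  have i2 : idx o2 < 3 := ltn_ord (idx o2).
  have key : forall u v w : nat, u < v -> v < w -> w < 3 -> [/\ u = 0, v = 1 & w = 2] by move=> u v w *; split; lia.
  have [h0 h1 h2] := key _ _ _ i01 i12 i2.
  have e0 : idx o0 = o0 by apply: ord_inj; exact: h0.
  have e1 : idx o1 = o1 by apply: ord_inj; exact: h1.
  have e2 : idx o2 = o2 by apply: ord_inj; exact: h2.
  have m0 := forallP mem o0; have m1 := forallP mem o1; have m2 := forallP mem o2.
  rewrite !ffunE !inE in m0 m1 m2.
  rewrite e0 in m0; rewrite e1 in m1; rewrite e2 in m2.
  have r02 := eqP (forallP (forallP ord o0) o2).
  have r21 := eqP (forallP (forallP ord o2) o1).
  apply/existsP; exists (b o0); apply/existsP; exists (b o2); apply/existsP; exists (b o1).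
  by rewrite m0 m1 m2 r02 r21.
case/existsP => x /existsP [z /existsP [y /and5P [xz zy fx fz fy]]].
apply/existsP; exists [ffun j => j].
apply/existsP; exists [ffun j : 'I_3 => if val j == 0 then x else if val j == 1 then y else z].
apply/and3P; split.
- apply/forallP => a; apply/forallP => c; rewrite !ffunE; exact/implyP.
- apply/forallP => -[[|[|[|j]]] Hj] //; rewrite !ffunE !inE /=.
  + by rewrite (eqP fx); apply/eqP/val_inj.
  + by rewrite (eqP fy); apply/eqP/val_inj.
  + by rewrite (eqP fz); apply/eqP/val_inj.
- apply/forallP => -[[|[|[|a]]] Ha] //; apply/forallP => -[[|[|[|c]]] Hc] //;
    rewrite !ffunE /= ?ltnn //; apply/eqP; lia.
Qed.

Lemma part_Bof f : is_ordered_partition (Bof f) = surj f.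
Proof.
rewrite /is_ordered_partition.
have -> : [forall i, forall j, (i != j) ==> [disjoint Bof f i & Bof f j]].
  apply/forallP => i; apply/forallP => j; apply/implyP => ij.
  rewrite -setI_eq0; apply/eqP/setP => x; rewrite !ffunE !inE.
  by apply/andP => -[/eqP hi /eqP hj]; move: ij; rewrite -hi -hj eqxx.
have -> : \bigcup_(i < 3) Bof f i == [set: 'I_n].
  apply/eqP/setP => x; rewrite inE; apply/bigcupP; exists (f x) => //.
  by rewrite ffunE inE.
rewrite !andbT; apply/forallP/forallP => h i.
  by case/set0Pn: (h i) => x; rewrite ffunE inE => hx; apply/existsP; exists x.
by apply/set0Pn; case/existsP: (h i) => x hx; exists x; rewrite ffunE inE.
Qed.

Lemma Bof_inj : injective Bof.
Proof.
move=> f g h; apply/ffunP => x.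
have : x \in Bof g (g x) by rewrite ffunE inE.
by rewrite -h ffunE inE => /eqP.
Qed.

Lemma part_Bof_ex B : is_ordered_partition B -> exists f, B = Bof f.
Proof.
case/and3P => _ /forallP dis /eqP cov.
have ex : forall x, exists i, x \in B i.
  by move=> x; have : x \in [set: 'I_n] by []; rewrite -cov => /bigcupP [i _ hi]; exists i.
have uniq : forall x i j, x \in B i -> x \in B j -> i = j.
  move=> x i j hi hj; apply/eqP; apply: contraT => ij.
  have := implyP (forallP (dis i) j) ij.
  by move/disjointFr => /(_ x hi); rewrite hj.
exists [ffun x => odflt o0 [pick i | x \in B i]].
apply/ffunP => i; apply/setP => x; rewrite !ffunE inE ffunE.
case: (pickP (fun k => x \in B k)) => [k hk|none] /=.
  apply/idP/eqP => [hx|<-//]; exact: (uniq x k i hk hx).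
by case: (ex x) => j hj; move: (none j); rewrite hj.
Qed.

Definition ft (t : n.-tuple 'I_3) : {ffun 'I_n -> 'I_3} := [ffun i => tnth t i].

Lemma ft_inj : injective ft.
Proof. by move=> t u h; apply: eq_from_tnth => i; have := congr1 (fun g : {ffun 'I_n -> 'I_3} => g i) h; rewrite !ffunE. Qed.

Lemma ft_surj (f : {ffun 'I_n -> 'I_3}) : f = ft [tuple f i | i < n].
Proof. by apply/ffunP => i; rewrite !ffunE tnth_mktuple. Qed.

Lemma surj_ft (t : n.-tuple 'I_3) : surj (ft t) = Qs setT t.
Proof.
rewrite /Qs; apply/forallP/subsetP => h i.
  move=> _; case/existsP: (h i) => x; rewrite ffunE => /eqP <-.
  by rewrite inE mem_tnth.
have : i \in [set:: t] by apply: h.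
rewrite inE => /tnthP [x ->]; apply/existsP; exists x; by rewrite ffunE.
Qed.

Lemma nth_ft (t : n.-tuple 'I_3) (x : 'I_n) : nth 0 (map val t) x = ft t x.
Proof.
by rewrite ffunE (nth_map o0) ?size_tuple // (tnth_nth o0).
Qed.

Lemma c3f_ft (t : n.-tuple 'I_3) : c3f (ft t) = subseq [:: 0; 2; 1] (map val t).
Proof.
apply/idP/idP.
  case/existsP => x /existsP [z /existsP [y /and5P [xz zy fx fz fy]]].
  apply/L3; exists x, z, y; split => //.
  - by rewrite size_map size_tuple.
  - by rewrite nth_ft (eqP fx).
  - by rewrite !nth_ft (eqP fz) (eqP fy).
case/L3 => x [z] [y] [xz zy]; rewrite size_map size_tuple => ys hx [hz hy].
have xn : x < n by lia.
have zn : z < n by lia.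
apply/existsP; exists (Ordinal xn); apply/existsP; exists (Ordinal zn).
apply/existsP; exists (Ordinal ys).
rewrite xz zy /=.
rewrite -!val_eqE /=.
by rewrite -!(nth_ft t (Ordinal _)) /= hx hz hy.
Qed.
End S.


Lemma sub_Qs m (t : m.-tuple 'I_3) : subseq [:: 0; 2; 1] (map val t) -> Qs setT t.
Proof.
move=> h; have hm := mem_subseq h.
apply/subsetP => i _; rewrite inE -(mem_map val_inj).
case: i => [[|[|[|?]]] Hi] //=; apply: hm; by rewrite !inE.
Qed.

Lemma main_nat n : 0 < n -> op_count n 3 pat132 + 3 * 2 ^ n = cp [:: 0; 2; 1] n + 3.
Proof.
move=> hn.
set G := [set f : {ffun 'I_n -> 'I_3} | surj f && ~~ c3f f].
have e1 : op_count n 3 pat132 = #|G|.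
  rewrite /op_count -(card_imset _ (@Bof_inj n)); apply: eq_card => B; rewrite inE; apply/idP/imsetP.
    case/andP => hp hc; case: (part_Bof_ex hp) => f ef; exists f => //.
    by rewrite inE -part_Bof -contains_Bof -ef hp.
  case=> f; rewrite inE => /andP [h1 h2] ->.
  by rewrite part_Bof contains_Bof h1.
set TT := [set t : n.-tuple 'I_3 | Qs setT t && ~~ subseq [:: 0; 2; 1] (map val t)].
have e2 : #|G| = #|TT|.
  rewrite -(card_imset _ (@ft_inj n)); apply: eq_card => f; rewrite inE; apply/idP/imsetP.
    move=> hf; exists [tuple f i | i < n]; last exact: ft_surj.
    by rewrite inE -surj_ft -c3f_ft -ft_surj.
  case=> t; rewrite inE => /andP [h1 h2] ->.
  by rewrite surj_ft c3f_ft h1.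
set A := [set t : n.-tuple 'I_3 | ~~ subseq [:: 0; 2; 1] (map val t)].
set QQ := [set t : n.-tuple 'I_3 | Qs setT t].
have h3 := cardsID QQ A.
have e4 : A :&: QQ = TT by apply/setP => t; rewrite !inE andbC.
have e5 : A :\: QQ = ~: QQ.
  apply/setP => t; rewrite !inE; case h: (Qs setT t) => //=.
  by apply: contraFN h; apply: sub_Qs.
have h6 := cardsC QQ.
rewrite card_tuple card_ord in h6.
have e7 : #|QQ| = F n 3 by have := cntQ n setT; rewrite cardsT card_ord => <-.
have eA : cp [:: 0; 2; 1] n = #|A| by [].
rewrite e1 e2 eA -e4; rewrite e5 in h3.
case: n hn G e1 TT e2 A QQ h3 e4 e5 h6 e7 eA => // m _ G e1 TT e2 A QQ h3 e4 e5 h6 e7 eA.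
have := F3 m.
lia.
Qed.

Local Open Scope ring_scope.

Unset Implicit Arguments. Set Strict Implicit.
Theorem theorem3 (n : nat) (hn : (0 < n)%N) :
  (op_count n 3 pat132)%:R
  = (((n ^ 2)%:R / 8 + 3%:R * n%:R / 8 - 2) * 2 ^+ n + 3 : rat).
Proof.
have h := main_nat hn; have h0 := c0E n.
move: h h0; set c := op_count n 3 pat132; set d := cp _ n => h h0.
have H1 : (c%:R + 3 * 2 ^+ n : rat) = d%:R + 3.
  have e : ((c + 3 * 2 ^ n)%N%:R : rat) = (d + 3)%N%:R by rewrite h.
  by rewrite natrD natrM natrX natrD in e.
have e : ((8 * d)%N%:R : rat) = (2 ^ n * (n ^ 2 + 3 * n + 8))%N%:R by rewrite h0.
rewrite natrM natrM !natrD natrM natrX in e.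
rewrite natrX.
lra.
Qed.
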